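(* Fix $p_{NS}=p_{min}\in(0,1)$. Let $P$ and $Q$ be semi-distributions on $\mathcal{I}=\{1,\dots,k\}$ with $P$ non-empty, and use the perfect NS-marker $\mathrm{isNS}_P$ with respect to $P$. Then $$\mathrm{LogLossNS}(Q\mid P)=H(\mathrm{DI}(P))+\mathrm{KL}_{NS}(P\,\|\,Q).$$
   Context: A semi-distribution (SD) on $\mathcal{I}$ is $W:\mathcal{I}\to[0,1]$ with $a(W):=\sum_i W(i)\le 1$; write $u(W):=1-a(W)$ and $\sup(W)=\{i:W(i)>0\}$; $W$ is non-empty if $a(W)>0$. Entropy: $H(D)=-\sum_i D(i)\ln D(i)$ (terms with $D(i)=0$ omitted). Drawing $o\sim P$ from a non-empty SD $P$: with probability $a(P)$, draw $o$ from the distribution $P/a(P)$; with probability $u(P)$, output a fresh unique ''noise'' item not in $\mathcal{I}$ (never generated before). The perfect NS-marker $\mathrm{isNS}_P(o)$ is true iff $o\notin\sup(P)$. $\mathrm{ScaleDrop}(W,\alpha,p_{min})$ is the SD $W'$ with $W'(i)=\alpha W(i)$ if $\alpha W(i)\ge p_{min}$ and $W'(i)=0$ otherwise. $\mathrm{FC}(W)$: let $W'=\mathrm{ScaleDrop}(W,1,p_{min})$; if $a(W')\le 1-p_{NS}$ return $W'$; otherwise return $\mathrm{ScaleDrop}(W',(1-p_{NS})/a(W'),p_{min})$. $\mathrm{loglossRuleNS}(o,W,m)$ for an observation $o$, map $W$ and Boolean $m$: let $W'=\mathrm{FC}(W)$ and $p=W'(o)$ (0 if $o$ is not in $\mathcal{I}$);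 if $p>0$ (equivalently $p\ge p_{min}$ and positive) return $-\ln p$; otherwise, if $m$ is false return $-\ln p_{NS}$, and if $m$ is true return $-\ln u(W')$. Then $\mathrm{LogLossNS}(Q\mid P):=\mathbb{E}_{o\sim P}[\mathrm{loglossRuleNS}(o,Q,\mathrm{isNS}_P(o))]$. Augmentation: for a non-empty SD $P$ on $\mathcal{I}$, $\mathrm{DI}(P)$ is the distribution on $\mathcal{I}\cup\{0\}$ with $\mathrm{DI}(P)(0)=u(P)$ and $\mathrm{DI}(P)(i)=P(i)$ for $i\in\mathcal{I}$. Bounded KL: $\mathrm{KL}_b(P\|Q):=\sum_{i\in\sup(P)}P(i)\ln\frac{P(i)}{\max(Q(i),p_{NS})}$, and $\mathrm{KL}_{NS}(P\|Q):=\mathrm{KL}_b(\mathrm{DI}(P)\,\|\,\mathrm{DI}(\mathrm{FC}(Q)))$. *)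

(* Defs.v *)
From HB Require Import structures.
From mathcomp Require Import all_boot all_order all_algebra.
From mathcomp Require Import reals exp.
Set Implicit Arguments. Unset Strict Implicit. Unset Printing Implicit Defensive.
Import Order.TTheory GRing.Theory Num.Theory.
Local Open Scope ring_scope.

Section SD.
Variable R : realType.

Definition is_SD (T : finType) (W : T -> R) : Prop :=
  (forall i, 0 <= W i <= 1) /\ \sum_(i : T) W i <= 1.

Definition amass (T : finType) (W : T -> R) : R := \sum_(i : T) W i.
Definition umass (T : finType) (W : T -> R) : R := 1 - amass W.

Definition entropy (T : finType) (D : T -> R) : R :=
  - \sum_(i : T | 0 < D i) D i * ln (D i).

Variables (pNS pmin : R).

Definition ScaleDrop (T : finType) (W : T -> R) (alpha : R) : T -> R :=
  fun i => if pmin <= alpha * W i then alpha * W i else 0.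

Definition FC (T : finType) (W : T -> R) : T -> R :=
  let W' := ScaleDrop W 1 in
  if amass W' <= 1 - pNS then W'
  else ScaleDrop W' ((1 - pNS) / amass W').

(* Observations: Some i for an item i of I, None for a (fresh) noise item
   outside I.  All noise items behave identically for the loss. *)
Definition obs_prob (T : finType) (P : T -> R) (o : option T) : R :=
  match o with
  | Some i => amass P * (P i / amass P)
  | None => umass P
  end.

Definition isNS (T : finType) (P : T -> R) (o : option T) : bool :=
  match o with
  | Some i => ~~ (0 < P i)
  | None => true
  end.

Definition loglossRuleNS (T : finType) (o : option T) (W : T -> R) (m : bool) : R :=
  let W' := FC W in
  let p := match o with Some i => W' i | None => 0 end in
  if 0 < p then - ln p
  else if ~~ m then - ln pNS
  else - ln (umass W').

Definition LogLossNS (T : finType) (Q P : T -> R) : R :=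
  \sum_(o : option T) obs_prob P o * loglossRuleNS o Q (isNS P o).

(* Augmentation DI(P): None plays the role of the extra element 0. *)
Definition DI (T : finType) (P : T -> R) : option T -> R :=
  fun o => match o with Some i => P i | None => umass P end.

Definition KL_b (T : finType) (P Q : T -> R) : R :=
  \sum_(i : T | 0 < P i) P i * ln (P i / Num.max (Q i) pNS).

Definition KL_NS (T : finType) (P Q : T -> R) : R :=
  KL_b (DI P) (DI (FC Q)).

End SD.

(* Main.v *)
Require Import Defs.
From HB Require Import structures.
From mathcomp Require Import all_boot all_order all_algebra.
From mathcomp Require Import reals exp lra.
Import Order.TTheory GRing.Theory Num.Theory.
Local Open Scope ring_scope.

Section Aux.
Variable R : realType.
Variables (pNS pmin : R).
Variable T : finType.

Lemma SD_ge0 (W : T -> R) (a : R) i : 0 <= a -> (forall j, 0 <= W j) ->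
  0 <= ScaleDrop pmin W a i.
Proof. by move=> a0 W0; rewrite /ScaleDrop; case: ifP => // _; rewrite mulr_ge0. Qed.

Lemma SD_le (W : T -> R) (a : R) i : 0 <= a -> (forall j, 0 <= W j) ->
  ScaleDrop pmin W a i <= a * W i.
Proof. by move=> a0 W0; rewrite /ScaleDrop; case: ifP => // _; rewrite mulr_ge0. Qed.

Lemma SD_cases (W : T -> R) (a : R) i :
  ScaleDrop pmin W a i = 0 \/ pmin <= ScaleDrop pmin W a i.
Proof. by rewrite /ScaleDrop; case: ifP => H; [right|left]. Qed.

Lemma FC_props (Q : T -> R) : 0 < pNS < 1 -> (forall j, 0 <= Q j) ->
  [/\ forall i, 0 <= FC pNS pmin Q i,
      forall i, FC pNS pmin Q i = 0 \/ pmin <= FC pNS pmin Q i &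
      amass (FC pNS pmin Q) <= 1 - pNS].
Proof.
move=> /andP[p0 p1] Q0.
have W0 : forall j, 0 <= ScaleDrop pmin Q 1 j by move=> j; apply: SD_ge0 => //.
rewrite /FC; case: ifP => Ha.
  split; [exact: W0 | exact: SD_cases | by rewrite Ha].
have Hpos : 0 < amass (ScaleDrop pmin Q 1).
  by apply: lt_le_trans (_ : 1 - pNS <= _); [rewrite subr_gt0 | apply: ltW; rewrite ltNge Ha].
have a0 : 0 <= (1 - pNS) / amass (ScaleDrop pmin Q 1).
  by rewrite divr_ge0 // ?subr_ge0 ?ltW.
split.
- by move=> i; apply: SD_ge0 => //.
- by move=> i; apply: SD_cases.
- rewrite /amass; apply: le_trans (ler_sum _ (fun i _ => SD_le _ _ i a0 W0)) _.
  by rewrite -mulr_sumr -/(amass _) divfK ?gt_eqF.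
Qed.
End Aux.

Theorem lemma5 (R : realType) (pNS pmin : R) (k : nat) (P Q : 'I_k -> R) :
  pNS = pmin -> 0 < pNS < 1 ->
  is_SD P -> is_SD Q -> 0 < amass P ->
  LogLossNS pNS pmin Q P = entropy (DI P) + KL_NS pNS pmin P Q.
Proof.
move=> <- Hp [P01 Psum] [Q01 _] aP.
have /andP[p0 p1] := Hp.
have Q0 : forall j, 0 <= Q j by move=> j; case/andP: (Q01 j).
have P0 : forall j, 0 <= P j by move=> j; case/andP: (P01 j).
have [F0 Fc Fa] := @FC_props R pNS pNS _ Q Hp Q0.
set W := FC pNS pNS Q in F0 Fc Fa *.
have uW : pNS <= umass W by rewrite /umass lerBrDl -lerBrDr.
rewrite /entropy /KL_NS /KL_b /LogLossNS -sumrN -big_split /=.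
rewrite [RHS]big_mkcond /=; apply: eq_bigr => o _.
have obsE : obs_prob P o = DI P o.
  by case: o => [i|] //=; rewrite mulrC divfK ?gt_eqF.
move: obsE.
have DI0 : 0 <= DI P o.
  by case: o => [i|] /=; [exact: P0 | rewrite /umass subr_ge0].
move=> obsE.
rewrite obsE; case: ifPn => Hpos; last first.
  have -> : DI P o = 0 by apply/eqP; rewrite eq_le DI0 andbT leNgt.
  by rewrite mul0r.
have lossE : loglossRuleNS pNS pNS o Q (isNS P o) = - ln (Num.max (DI W o) pNS).
  move: Hpos; clear obsE DI0; case: o => [i|] /= Hpos.
    rewrite /loglossRuleNS Hpos /= -/W. case: ifPn => HW.
      by rewrite max_l //; case: (Fc i) => H; [rewrite H ltxx in HW|].
    have -> : W i = 0 by case: (Fc i) => // H; move: HW; rewrite (lt_le_trans p0 H).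
    by rewrite max_r // ltW.
  rewrite /loglossRuleNS /= -/W ltxx /=. by rewrite max_l.
have Mpos : 0 < Num.max (DI W o) pNS by rewrite lt_max p0 orbT.
rewrite lossE ln_div ?posrE //.
lra.
Qed.
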